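(* Let $\mathcal{G}$ be the complete quadrilateral with points $a,b,c,x,y,z$ and lines $\{a,b,c\}$, $\{a,y,z\}$, $\{b,x,z\}$, $\{c,x,y\}$; let $R$ be a commutative ring with $2=0$, $A=M_R(\mathcal{G},1)$, $\ell=a+b+c$ and $s=a+b+c+x+y+z$. Then $A=A^\ell_0\oplus A^\ell_1$, where $A^\ell_0$ and $A^\ell_1$ are the eigenspaces of $\operatorname{ad}_\ell$ for the eigenvalues $0$ and $1$, and \[ A^\ell_0=\langle a,b,c,x+y+z\rangle=\langle a,b,c,s\rangle,\qquad A^\ell_1=\langle \ell x,\ell y\rangle . \]
   Context: For distinct collinear points $p,q$ (written $p\sim q$), $p\wedge q$ is the third point of their line. The nilpotent Matsuo algebra $A=M_R(\mathcal{G},1)$ is the free $R$-module with basis the points and commutative bilinear product $p\cdot q=0$ if $p=q$ or $p\not\sim q$, $p\cdot q=p+q+p\wedge q$ if $p\sim q$. $\operatorname{ad}_\ell(v)=\ell v$; the eigenspace for $\lambda$ is $\{v:\ell v=\lambda v\}$. Angle brackets denote $R$-linear span. *)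

(* Defs.v *)
From HB Require Import structures.
From mathcomp Require Import all_boot all_order all_algebra.
Set Implicit Arguments. Unset Strict Implicit. Unset Printing Implicit Defensive.
Import Order.TTheory GRing.Theory Num.Theory.
Local Open Scope ring_scope.

Definition pa : 'I_6 := inord 0.
Definition pb : 'I_6 := inord 1.
Definition pc : 'I_6 := inord 2.
Definition px : 'I_6 := inord 3.
Definition py : 'I_6 := inord 4.
Definition pz : 'I_6 := inord 5.

Definition lines : seq (seq 'I_6) :=
  [:: [:: pa; pb; pc]; [:: pa; py; pz]; [:: pb; px; pz]; [:: pc; px; py]].

Definition collinear (p q : 'I_6) : bool :=
  (p != q) && has (fun L => (p \in L) && (q \in L)) lines.

Definition wedge (p q : 'I_6) : 'I_6 :=
  odflt p [pick r | [&& r != p, r != q &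
                      has (fun L => [&& p \in L, q \in L & r \in L]) lines]].

(* The algebra A = M_R(G,1): free R-module on the points, as row vectors
   indexed by the points. *)
Notation Alg R := 'rV[R]_6 (only parsing).

Definition pt (R : comPzRingType) (p : 'I_6) : Alg R := \row_(q < 6) (q == p)%:R.

Definition pprod (R : comPzRingType) (p q : 'I_6) : Alg R :=
  if collinear p q then pt R p + pt R q + pt R (wedge p q) else 0.

Definition amul (R : comPzRingType) (u v : Alg R) : Alg R :=
  \sum_(p : 'I_6) \sum_(q : 'I_6) (u 0 p * v 0 q) *: pprod R p q.

Definition eigen (R : comPzRingType) (l : Alg R) (lam : R) (v : Alg R) : Prop :=
  amul l v = lam *: v.

Definition in_span (R : comPzRingType) (vs : seq (Alg R)) (v : Alg R) : Prop :=
  exists k : 'I_(size vs) -> R, v = \sum_(i < size vs) k i *: nth 0 vs i.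

(* Main.v *)
Require Import Defs.
From HB Require Import structures.
From mathcomp Require Import all_boot all_order all_algebra ring.
Import GRing.Theory.
Local Open Scope ring_scope.
Definition o0 : 'I_6 := @Ordinal 6 0 isT.
Definition o1 : 'I_6 := @Ordinal 6 1 isT.
Definition o2 : 'I_6 := @Ordinal 6 2 isT.
Definition o3 : 'I_6 := @Ordinal 6 3 isT.
Definition o4 : 'I_6 := @Ordinal 6 4 isT.
Definition o5 : 'I_6 := @Ordinal 6 5 isT.
Lemma paE : pa = o0. Proof. by apply: val_inj; rewrite /= inordK. Qed.
Lemma pbE : pb = o1. Proof. by apply: val_inj; rewrite /= inordK. Qed.
Lemma pcE : pc = o2. Proof. by apply: val_inj; rewrite /= inordK. Qed.
Lemma pxE : px = o3. Proof. by apply: val_inj; rewrite /= inordK. Qed.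
Lemma pyE : py = o4. Proof. by apply: val_inj; rewrite /= inordK. Qed.
Lemma pzE : pz = o5. Proof. by apply: val_inj; rewrite /= inordK. Qed.
Lemma linesE : lines = [:: [:: o0; o1; o2]; [:: o0; o4; o5]; [:: o1; o3; o5]; [:: o2; o3; o4]].
Proof. by rewrite /lines paE pbE pcE pxE pyE pzE. Qed.
Lemma ord6 (r : 'I_6) : r = o0 \/ r = o1 \/ r = o2 \/ r = o3 \/ r = o4 \/ r = o5.
Proof.
case: r => [[|[|[|[|[|[|//]]]]]] H].
- by left; apply: val_inj.
- by right; left; apply: val_inj.
- by do 2 right; left; apply: val_inj.
- by do 3 right; left; apply: val_inj.
- by do 4 right; left; apply: val_inj.
- by do 5 right; apply: val_inj.
Qed.
Lemma pick_eq (P : pred 'I_6) w : (forall r, P r = (r == w)) -> [pick r | P r] = Some w.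
Proof.
move=> H; case: pickP => [r|H0]; first by rewrite H => /eqP ->.
by move: (H0 w); rewrite H eqxx.
Qed.

Lemma pp00 R : pprod R o0 o0 = 0.
Proof.
have C : collinear o0 o0 = false by rewrite /collinear linesE; vm_compute.
by rewrite /pprod C.
Qed.

Lemma pp01 R : pprod R o0 o1 = pt R o0 + pt R o1 + pt R o2.
Proof.
have C : collinear o0 o1 by rewrite /collinear linesE; vm_compute.
have W : wedge o0 o1 = o2.
  rewrite /wedge linesE (@pick_eq _ o2) //.
  by move=> r; case: (ord6 r) => [|[|[|[|[|]]]]] ->; vm_compute.
by rewrite /pprod C W.
Qed.

Lemma pp02 R : pprod R o0 o2 = pt R o0 + pt R o2 + pt R o1.
Proof.
have C : collinear o0 o2 by rewrite /collinear linesE; vm_compute.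
have W : wedge o0 o2 = o1.
  rewrite /wedge linesE (@pick_eq _ o1) //.
  by move=> r; case: (ord6 r) => [|[|[|[|[|]]]]] ->; vm_compute.
by rewrite /pprod C W.
Qed.

Lemma pp03 R : pprod R o0 o3 = 0.
Proof.
have C : collinear o0 o3 = false by rewrite /collinear linesE; vm_compute.
by rewrite /pprod C.
Qed.

Lemma pp04 R : pprod R o0 o4 = pt R o0 + pt R o4 + pt R o5.
Proof.
have C : collinear o0 o4 by rewrite /collinear linesE; vm_compute.
have W : wedge o0 o4 = o5.
  rewrite /wedge linesE (@pick_eq _ o5) //.
  by move=> r; case: (ord6 r) => [|[|[|[|[|]]]]] ->; vm_compute.
by rewrite /pprod C W.
Qed.

Lemma pp05 R : pprod R o0 o5 = pt R o0 + pt R o5 + pt R o4.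
Proof.
have C : collinear o0 o5 by rewrite /collinear linesE; vm_compute.
have W : wedge o0 o5 = o4.
  rewrite /wedge linesE (@pick_eq _ o4) //.
  by move=> r; case: (ord6 r) => [|[|[|[|[|]]]]] ->; vm_compute.
by rewrite /pprod C W.
Qed.

Lemma pp10 R : pprod R o1 o0 = pt R o1 + pt R o0 + pt R o2.
Proof.
have C : collinear o1 o0 by rewrite /collinear linesE; vm_compute.
have W : wedge o1 o0 = o2.
  rewrite /wedge linesE (@pick_eq _ o2) //.
  by move=> r; case: (ord6 r) => [|[|[|[|[|]]]]] ->; vm_compute.
by rewrite /pprod C W.
Qed.

Lemma pp11 R : pprod R o1 o1 = 0.
Proof.
have C : collinear o1 o1 = false by rewrite /collinear linesE; vm_compute.
by rewrite /pprod C.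
Qed.

Lemma pp12 R : pprod R o1 o2 = pt R o1 + pt R o2 + pt R o0.
Proof.
have C : collinear o1 o2 by rewrite /collinear linesE; vm_compute.
have W : wedge o1 o2 = o0.
  rewrite /wedge linesE (@pick_eq _ o0) //.
  by move=> r; case: (ord6 r) => [|[|[|[|[|]]]]] ->; vm_compute.
by rewrite /pprod C W.
Qed.

Lemma pp13 R : pprod R o1 o3 = pt R o1 + pt R o3 + pt R o5.
Proof.
have C : collinear o1 o3 by rewrite /collinear linesE; vm_compute.
have W : wedge o1 o3 = o5.
  rewrite /wedge linesE (@pick_eq _ o5) //.
  by move=> r; case: (ord6 r) => [|[|[|[|[|]]]]] ->; vm_compute.
by rewrite /pprod C W.
Qed.

Lemma pp14 R : pprod R o1 o4 = 0.
Proof.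
have C : collinear o1 o4 = false by rewrite /collinear linesE; vm_compute.
by rewrite /pprod C.
Qed.

Lemma pp15 R : pprod R o1 o5 = pt R o1 + pt R o5 + pt R o3.
Proof.
have C : collinear o1 o5 by rewrite /collinear linesE; vm_compute.
have W : wedge o1 o5 = o3.
  rewrite /wedge linesE (@pick_eq _ o3) //.
  by move=> r; case: (ord6 r) => [|[|[|[|[|]]]]] ->; vm_compute.
by rewrite /pprod C W.
Qed.

Lemma pp20 R : pprod R o2 o0 = pt R o2 + pt R o0 + pt R o1.
Proof.
have C : collinear o2 o0 by rewrite /collinear linesE; vm_compute.
have W : wedge o2 o0 = o1.
  rewrite /wedge linesE (@pick_eq _ o1) //.
  by move=> r; case: (ord6 r) => [|[|[|[|[|]]]]] ->; vm_compute.
by rewrite /pprod C W.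
Qed.

Lemma pp21 R : pprod R o2 o1 = pt R o2 + pt R o1 + pt R o0.
Proof.
have C : collinear o2 o1 by rewrite /collinear linesE; vm_compute.
have W : wedge o2 o1 = o0.
  rewrite /wedge linesE (@pick_eq _ o0) //.
  by move=> r; case: (ord6 r) => [|[|[|[|[|]]]]] ->; vm_compute.
by rewrite /pprod C W.
Qed.

Lemma pp22 R : pprod R o2 o2 = 0.
Proof.
have C : collinear o2 o2 = false by rewrite /collinear linesE; vm_compute.
by rewrite /pprod C.
Qed.

Lemma pp23 R : pprod R o2 o3 = pt R o2 + pt R o3 + pt R o4.
Proof.
have C : collinear o2 o3 by rewrite /collinear linesE; vm_compute.
have W : wedge o2 o3 = o4.
  rewrite /wedge linesE (@pick_eq _ o4) //.
  by move=> r; case: (ord6 r) => [|[|[|[|[|]]]]] ->; vm_compute.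
by rewrite /pprod C W.
Qed.

Lemma pp24 R : pprod R o2 o4 = pt R o2 + pt R o4 + pt R o3.
Proof.
have C : collinear o2 o4 by rewrite /collinear linesE; vm_compute.
have W : wedge o2 o4 = o3.
  rewrite /wedge linesE (@pick_eq _ o3) //.
  by move=> r; case: (ord6 r) => [|[|[|[|[|]]]]] ->; vm_compute.
by rewrite /pprod C W.
Qed.

Lemma pp25 R : pprod R o2 o5 = 0.
Proof.
have C : collinear o2 o5 = false by rewrite /collinear linesE; vm_compute.
by rewrite /pprod C.
Qed.



Lemma sum6 (V : nmodType) (F : 'I_6 -> V) :
  \sum_(p < 6) F p = F o0 + F o1 + F o2 + F o3 + F o4 + F o5.
Proof.
rewrite !big_ord_recr big_ord0 /= add0r.
by congr (_ + _ + _ + _ + _ + _); congr F; apply: val_inj.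
Qed.

Section S.
Variable R : comPzRingType.
Hypothesis h2 : 2%:R = 0 :> R.

Lemma row6 (u w : 'rV[R]_6) : u 0 o0 = w 0 o0 -> u 0 o1 = w 0 o1 -> u 0 o2 = w 0 o2 ->
  u 0 o3 = w 0 o3 -> u 0 o4 = w 0 o4 -> u 0 o5 = w 0 o5 -> u = w.
Proof.
move=> H0 H1 H2 H3 H4 H5; apply/rowP => j.
by case: (ord6 j) => [|[|[|[|[|]]]]] ->.
Qed.

Definition lv (v : 'rV[R]_6) : 'rV[R]_6 :=
  \row_j nth 0 [:: v 0 o4 + v 0 o5; v 0 o3 + v 0 o5; v 0 o3 + v 0 o4;
                   v 0 o4 + v 0 o5; v 0 o3 + v 0 o5; v 0 o3 + v 0 o4] j.

Lemma addE (u w : 'rV[R]_6) j : (u + w) 0 j = u 0 j + w 0 j. Proof. by rewrite mxE. Qed.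
Lemma scaleE k (u : 'rV[R]_6) j : (k *: u) 0 j = k * u 0 j. Proof. by rewrite mxE. Qed.
Lemma ptE p j : pt R p 0 j = (j == p)%:R. Proof. by rewrite mxE. Qed.
Lemma zeroE j : (0 : 'rV[R]_6) 0 j = 0. Proof. by rewrite mxE. Qed.

Lemma c2 (e1 e2 t : R) : e1 = e2 + t * 2%:R -> e1 = e2.
Proof. by rewrite h2 mulr0 addr0. Qed.

Lemma amulE v : amul (pt R pa + pt R pb + pt R pc) v = lv v.
Proof.
rewrite /amul paE pbE pcE sum6 !mxE /= ?mulr1n ?mulr0n ?addr0 ?add0r ?mul1r ?mul0r.
rewrite !sum6 ?scale0r ?addr0 ?add0r.
rewrite pp00 pp01 pp02 pp03 pp04 pp05 pp10 pp11 pp12 pp13 pp14 pp15 pp20 pp21 pp22 pp23 pp24 pp25 ?scaler0 ?mul1r ?mul0r ?scale0r ?addr0 ?add0r.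
apply: row6.
- rewrite !mxE /= ?mulr1n ?mulr0n. apply: (@c2 _ _ (v 0 o0 + v 0 o1 + v 0 o2)); ring.
- rewrite !mxE /= ?mulr1n ?mulr0n. apply: (@c2 _ _ (v 0 o0 + v 0 o1 + v 0 o2)); ring.
- rewrite !mxE /= ?mulr1n ?mulr0n. apply: (@c2 _ _ (v 0 o0 + v 0 o1 + v 0 o2)); ring.
- rewrite !mxE /= ?mulr1n ?mulr0n. apply: (@c2 _ _ (v 0 o3)); ring.
- rewrite !mxE /= ?mulr1n ?mulr0n. apply: (@c2 _ _ (v 0 o4)); ring.
- rewrite !mxE /= ?mulr1n ?mulr0n. apply: (@c2 _ _ (v 0 o5)); ring.
Qed.

Lemma sum4 (V : nmodType) (F : 'I_4 -> V) :
  \sum_(i < 4) F i = F (@Ordinal 4 0 isT) + F (@Ordinal 4 1 isT) + F (@Ordinal 4 2 isT) + F (@Ordinal 4 3 isT).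
Proof.
rewrite !big_ord_recr big_ord0 /= add0r.
by congr (_ + _ + _ + _); congr F; apply: val_inj.
Qed.
Lemma sum2 (V : nmodType) (F : 'I_2 -> V) :
  \sum_(i < 2) F i = F (@Ordinal 2 0 isT) + F (@Ordinal 2 1 isT).
Proof.
rewrite !big_ord_recr big_ord0 /= add0r.
by congr (_ + _); congr F; apply: val_inj.
Qed.
End S.

Ltac sc := rewrite !mxE /= ?mulr1n ?mulr0n.

Theorem proposition5p12 (R : comPzRingType) (h2 : 2%:R = 0 :> R) :
  let a := pt R pa in let b := pt R pb in let c := pt R pc in
  let x := pt R px in let y := pt R py in let z := pt R pz in
  let l := a + b + c in
  let s := a + b + c + x + y + z in
  (* A = A_0 + A_1, and the sum is direct *)
  (forall v : Alg R, exists v0 v1, eigen l 0 v0 /\ eigen l 1 v1 /\ v = v0 + v1) /\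
  (forall v : Alg R, eigen l 0 v -> eigen l 1 v -> v = 0) /\
  (* A_0 = <a,b,c,x+y+z> = <a,b,c,s> *)
  (forall v : Alg R, eigen l 0 v <-> in_span [:: a; b; c; x + y + z] v) /\
  (forall v : Alg R, eigen l 0 v <-> in_span [:: a; b; c; s] v) /\
  (* A_1 = <l x, l y> *)
  (forall v : Alg R, eigen l 1 v <-> in_span [:: amul l x; amul l y] v).
Proof.
move=> a b c x y z l s.
have E : forall v, amul l v = lv R v by move=> v; apply: amulE.
rewrite /in_span /eigen !E /s /a /b /c /x /y /z paE pbE pcE pxE pyE pzE.
split.
  move=> v.
  pose v1 := (v 0 o4 + v 0 o5) *: lv R (pt R o4) + (v 0 o3 + v 0 o5) *: lv R (pt R o3).
  exists (v - v1), v1; split; last split; last by rewrite subrK.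
  - rewrite !E; apply: row6; rewrite /v1; sc; [ apply: (@c2 R h2 _ _ ((- (v 0 o3)) + (- (v 0 o5)))); ring
  | apply: (@c2 R h2 _ _ ((- (v 0 o4)) + (- (v 0 o5)))); ring
  | apply: (@c2 R h2 _ _ ((- (v 0 o5)))); ring
  | apply: (@c2 R h2 _ _ ((- (v 0 o3)) + (- (v 0 o5)))); ring
  | apply: (@c2 R h2 _ _ ((- (v 0 o4)) + (- (v 0 o5)))); ring
  | apply: (@c2 R h2 _ _ ((- (v 0 o5)))); ring ].
  - rewrite !E; apply: row6; rewrite /v1; sc; [ apply: (@c2 R h2 _ _ ((v 0 o3) + (v 0 o5))); ring
  | apply: (@c2 R h2 _ _ ((v 0 o4) + (v 0 o5))); ring
  | apply: (@c2 R h2 _ _ (0)); ring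
  | apply: (@c2 R h2 _ _ ((v 0 o3) + (v 0 o5))); ring
  | apply: (@c2 R h2 _ _ ((v 0 o4) + (v 0 o5))); ring
  | apply: (@c2 R h2 _ _ (0)); ring ].
split.
  by move=> v H0 H1; rewrite -[v]scale1r -H1 H0 scale0r.
split.
  move=> v; split.
  - move=> H; rewrite !E in H.
    have H3 := congr1 (fun w : 'rV[R]_6 => w 0 o3) H.
    have H4 := congr1 (fun w : 'rV[R]_6 => w 0 o4) H.
    have H5 := congr1 (fun w : 'rV[R]_6 => w 0 o5) H.
    move: H3 H4 H5; sc; rewrite !mul0r => H3 H4 H5.
    move/eqP: H3; rewrite addr_eq0 => /eqP e4.
    move/eqP: H4; rewrite addr_eq0 => /eqP e3.
    exists (fun i : 'I_4 => nth 0 [:: v 0 o0; v 0 o1; v 0 o2; v 0 o3] i).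
    rewrite sum4 /=; apply: row6; sc; rewrite ?e4 ?e3; [ apply: (@c2 R h2 _ _ (0)); ring
  | apply: (@c2 R h2 _ _ (0)); ring
  | apply: (@c2 R h2 _ _ (0)); ring
  | apply: (@c2 R h2 _ _ (0)); ring
  | apply: (@c2 R h2 _ _ (0)); ring
  | apply: (@c2 R h2 _ _ ((v 0 o5))); ring ].
  - case=> k ->; rewrite !E sum4 /=; apply: row6; sc; [ apply: (@c2 R h2 _ _ ((k (@Ordinal 4 3 isT)))); ring
  | apply: (@c2 R h2 _ _ ((k (@Ordinal 4 3 isT)))); ring
  | apply: (@c2 R h2 _ _ ((k (@Ordinal 4 3 isT)))); ring
  | apply: (@c2 R h2 _ _ ((k (@Ordinal 4 3 isT)))); ring
  | apply: (@c2 R h2 _ _ ((k (@Ordinal 4 3 isT)))); ring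
  | apply: (@c2 R h2 _ _ ((k (@Ordinal 4 3 isT)))); ring ].
split.
  move=> v; split.
  - move=> H; rewrite !E in H.
    have H3 := congr1 (fun w : 'rV[R]_6 => w 0 o3) H.
    have H4 := congr1 (fun w : 'rV[R]_6 => w 0 o4) H.
    have H5 := congr1 (fun w : 'rV[R]_6 => w 0 o5) H.
    move: H3 H4 H5; sc; rewrite !mul0r => H3 H4 H5.
    move/eqP: H3; rewrite addr_eq0 => /eqP e4.
    move/eqP: H4; rewrite addr_eq0 => /eqP e3.
    exists (fun i : 'I_4 => nth 0 [:: v 0 o0 - v 0 o3; v 0 o1 - v 0 o3; v 0 o2 - v 0 o3; v 0 o3] i).
    rewrite sum4 /=; apply: row6; sc; rewrite ?e4 ?e3; [ apply: (@c2 R h2 _ _ (0)); ring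
  | apply: (@c2 R h2 _ _ (0)); ring
  | apply: (@c2 R h2 _ _ (0)); ring
  | apply: (@c2 R h2 _ _ (0)); ring
  | apply: (@c2 R h2 _ _ (0)); ring
  | apply: (@c2 R h2 _ _ ((v 0 o5))); ring ].
  - case=> k ->; rewrite !E sum4 /=; apply: row6; sc; [ apply: (@c2 R h2 _ _ ((k (@Ordinal 4 3 isT)))); ring
  | apply: (@c2 R h2 _ _ ((k (@Ordinal 4 3 isT)))); ring
  | apply: (@c2 R h2 _ _ ((k (@Ordinal 4 3 isT)))); ring
  | apply: (@c2 R h2 _ _ ((k (@Ordinal 4 3 isT)))); ring
  | apply: (@c2 R h2 _ _ ((k (@Ordinal 4 3 isT)))); ring
  | apply: (@c2 R h2 _ _ ((k (@Ordinal 4 3 isT)))); ring ].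
move=> v; split.
- move=> H; rewrite !E in H.
  have H0 := congr1 (fun w : 'rV[R]_6 => w 0 o0) H.
  have H1 := congr1 (fun w : 'rV[R]_6 => w 0 o1) H.
  have H2 := congr1 (fun w : 'rV[R]_6 => w 0 o2) H.
  have H3 := congr1 (fun w : 'rV[R]_6 => w 0 o3) H.
  have H4 := congr1 (fun w : 'rV[R]_6 => w 0 o4) H.
  have H5 := congr1 (fun w : 'rV[R]_6 => w 0 o5) H.
  move: H0 H1 H2 H3 H4 H5; sc; rewrite !mul1r => H0 H1 H2 H3 H4 H5.
  have e0 := esym H0. have e1 := esym H1. have e2 := esym H2. have e5 := esym H5.
  exists (fun i : 'I_2 => nth 0 [:: v 0 o4; v 0 o3] i).
  rewrite sum2 /=; apply: row6; sc; rewrite ?e0 ?e1 ?e2 ?e5; [ apply: (@c2 R h2 _ _ ((v 0 o4))); ring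
  | apply: (@c2 R h2 _ _ ((v 0 o3))); ring
  | apply: (@c2 R h2 _ _ (0)); ring
  | apply: (@c2 R h2 _ _ (0)); ring
  | apply: (@c2 R h2 _ _ (0)); ring
  | apply: (@c2 R h2 _ _ (0)); ring ].
- case=> k ->; rewrite !E sum2 /=; apply: row6; sc; [ apply: (@c2 R h2 _ _ ((k (@Ordinal 2 0 isT)))); ring
  | apply: (@c2 R h2 _ _ ((k (@Ordinal 2 1 isT)))); ring
  | apply: (@c2 R h2 _ _ (0)); ring
  | apply: (@c2 R h2 _ _ ((k (@Ordinal 2 0 isT)))); ring
  | apply: (@c2 R h2 _ _ ((k (@Ordinal 2 1 isT)))); ring
  | apply: (@c2 R h2 _ _ (0)); ring ].
Qed.
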